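(* Let $\mathbf{B}$ be a commutative unital ring and $n\ge0$. The formulae $$A_n(X)=\bigoplus_{\substack{\#A=X\\|A|=n}}A,\qquad A_n(P)=\sum_{d}\ \prod_{p}\overline p^{\,d_p}\begin{bmatrix}x_p\\ y_p\end{bmatrix}^{[d_p]}$$ define a linear functor $A_n\colon\mathfrak{Laby}\to\mathfrak{MSet}_n$. Here $X$ is a finite set, $A$ ranges over multi-sets of cardinality $n$ with support exactly $X$, $P$ is a maze whose passage occurrences are $p\colon x_p\to y_p$, and $d$ ranges over assignments of integers $d_p\ge1$ to the passage occurrences with $\sum_pd_p=n$.
   Context: Multi-sets: finite sets with positive integer multiplicities; $|A|$ is the sum of multiplicities and $\#A$ the support. For $|A|=|B|=n$, a multation $\mu\colon A\to B$ is a multi-set of pairs $(a,b)$ whose multi-set of first coordinates is $A$ and of second coordinates is $B$. $\mathfrak{MSet}_n$: objects formal finite direct sums of multi-sets of cardinality $n$; $\mathfrak{MSet}_n(A,B)$ free $\mathbf{B}$-module on multations $A\to B$; composition of $\nu\colon A\to B$, $\mu\colon B\to C$: $\mu\circ\nu=\sum_K\frac{\prod_{(a,c)}m_{K_{13}}(a,c)!}{\prod_{(a,b,c)}m_K(a,b,c)!}K_{13}$, summed over multi-sets $K$ of triples whose $(1,2)$-projection is $\nu$ and $(2,3)$-projection is $\mu$ ($m$ = multiplicity). For distinct pairs, $\prod_j[a_j;b_j]^{[m_j]}$ denotes the multation containing $(a_j,b_j)$ with multiplicity $m_j$, with the rule $[a;b]^{[i]}[a;b]^{[j]}=\binom{i+j}i[a;b]^{[i+j]}$;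 thus each term of $A_n(P)$ is a scalar multiple of a multation from a multi-set with support $X$ to one with support $Y$, i.e. a morphism $A_n(X)\to A_n(Y)$. Mazes: a passage $p\colon x\to y$ between elements of finite sets carries a label $\overline p\in\mathbf{B}$; a maze $P\colon X\to Y$ is a finite multi-set of passages such that every element of $X$ is a source and every element of $Y$ a target of some passage. $\mathfrak{Laby}$: objects formal finite direct sums of finite sets; $\mathfrak{Laby}(X,Y)$ the $\mathbf{B}$-module generated by mazes $X\to Y$ modulo (I) $P\cup\{x\xrightarrow0y\}=0$ and (II) $P\cup\{x\xrightarrow{a+b}y\}=P\cup\{x\xrightarrow ay\}+P\cup\{x\xrightarrow by\}+P\cup\{x\xrightarrow ay,x\xrightarrow by\}$ (for multi-sets $P$ of passages); composition $P\circ Q=\sum_{U\sqsubseteq P\boxtimes Q}U$, where $U$ runs over sub-multi-sets of the multi-set of composable pairs ($q\colon x\to y\in Q$, $p\colon y\to z\in P$) using every passage occurrence of $P$ and of $Q$, $U$ being read as the maze with passages $x\xrightarrow{\overline p\overline q}z$. *)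

(* Defs.v *)
From HB Require Import structures.
From mathcomp Require Import all_boot all_algebra.
Set Implicit Arguments. Unset Strict Implicit. Unset Printing Implicit Defensive.
Import GRing.Theory.

Section MazeFunctor.
Variable R : comPzRingType.
Variable n : nat.

Definition mpairs (X Y : finType) := {ffun X * Y -> 'I_n.+1}.

Definition rowsum (X Y : finType) (m : X * Y -> nat) (x : X) : nat :=
  (\sum_(y : Y) m (x, y))%N.
Definition colsum (X Y : finType) (m : X * Y -> nat) (y : Y) : nat :=
  (\sum_(x : X) m (x, y))%N.

(* mu is a multation A -> B between multi-sets of cardinality n whose
   supports are exactly X and Y (A, B are its two projections). *)
Definition is_multation (X Y : finType) (mu : mpairs X Y) : bool :=
  [&& (\sum_(xy : X * Y) (mu xy : nat) == n)%N,
      [forall x : X, 0 < rowsum (fun xy => (mu xy : nat)) x]%N &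
      [forall y : Y, 0 < colsum (fun xy => (mu xy : nat)) y]%N].

Definition multation (X Y : finType) := {mu : mpairs X Y | is_multation mu}.

(* Hom(A_n(X), A_n(Y)) = (+)_{A,B} MSet_n(A,B), i.e. the free B-module on
   all multations between a multi-set with support X and one with support Y. *)
Definition Hom (X Y : finType) := {ffun multation X Y -> R}.

Definition agrees (X Y : finType) (m : X * Y -> nat) (mu : multation X Y) : bool :=
  [forall xy : X * Y, m xy == (val mu xy : nat)].

Definition mtriples (X Y Z : finType) := {ffun X * Y * Z -> 'I_n.+1}.
Definition proj12 (X Y Z : finType) (K : mtriples X Y Z) : X * Y -> nat :=
  fun xy => (\sum_(z : Z) (K (xy.1, xy.2, z) : nat))%N.
Definition proj23 (X Y Z : finType) (K : mtriples X Y Z) : Y * Z -> nat :=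
  fun yz => (\sum_(x : X) (K (x, yz.1, yz.2) : nat))%N.
Definition proj13 (X Y Z : finType) (K : mtriples X Y Z) : X * Z -> nat :=
  fun xz => (\sum_(y : Y) (K (xz.1, y, xz.2) : nat))%N.

(* prod_{(a,c)} m_{K13}(a,c)! / prod_{(a,b,c)} m_K(a,b,c)!  (an exact division) *)
Definition mcoef (X Y Z : finType) (K : mtriples X Y Z) : nat :=
  ((\prod_(xz : X * Z) (proj13 K xz)`!) %/ (\prod_(t : X * Y * Z) (K t : nat)`!))%N.

Definition mcomp (X Y Z : finType) (f : Hom X Y) (g : Hom Y Z) : Hom X Z :=
  [ffun rho : multation X Z =>
     (\sum_(nu : multation X Y) \sum_(mu : multation Y Z)
       \sum_(K : mtriples X Y Z |
               [&& agrees (proj12 K) nu, agrees (proj23 K) mu & agrees (proj13 K) rho])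
          ((mcoef K)%:R * f nu * g mu))%R].

Definition mid (X : finType) : Hom X X :=
  [ffun mu : multation X X =>
     if [forall xy : X * X, (xy.1 != xy.2) ==> ((val mu xy : nat) == 0%N)]
     then 1%R else 0%R].

Definition passage (X Y : finType) := (X * Y * R)%type.

(* a maze is a finite multi-set of passages (represented by a list, up to
   permutation) in which every x is a source and every y a target *)
Definition is_maze (X Y : finType) (P : seq (passage X Y)) : bool :=
  [forall x : X, has (fun p : passage X Y => p.1.1 == x) P] &&
  [forall y : Y, has (fun p : passage X Y => p.1.2 == y) P].

(* The multi-set of pairs prod_p [x_p;y_p]^{[d_p]} (as a nat-valued function) *)
Definition dmult (X Y : finType) (P : seq (passage X Y))
    (d : {ffun 'I_(size P) -> 'I_n.+1}) : X * Y -> nat :=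
  fun xy => (\sum_(i : 'I_(size P) | (tnth (in_tuple P) i).1 == xy) (d i : nat))%N.

(* scalar from the rule [a;b]^{[i]}[a;b]^{[j]} = C(i+j,i)[a;b]^{[i+j]}:
   prod_{(x,y)} (sum_{p : x->y} d_p)! / prod_p d_p!  (exact division) *)
Definition dcoef (X Y : finType) (P : seq (passage X Y))
    (d : {ffun 'I_(size P) -> 'I_n.+1}) : nat :=
  ((\prod_(xy : X * Y) (dmult d xy)`!) %/ (\prod_(i : 'I_(size P)) (d i : nat)`!))%N.

Definition An (X Y : finType) (P : seq (passage X Y)) : Hom X Y :=
  [ffun mu : multation X Y =>
     (\sum_(d : {ffun 'I_(size P) -> 'I_n.+1} |
             [&& [forall i, 0 < (d i : nat)]%N,
                 (\sum_(i : 'I_(size P)) (d i : nat) == n)%N &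
                 agrees (dmult d) mu])
       ((\prod_(i : 'I_(size P)) (tnth (in_tuple P) i).2 ^+ (d i : nat)) * (dcoef d)%:R))%R].

(* U : set of composable pairs (occurrence i of Q, occurrence j of P) using
   every passage occurrence of P and of Q *)
Definition lvalid (X Y Z : finType) (Q : seq (passage X Y)) (P : seq (passage Y Z))
    (U : {set 'I_(size Q) * 'I_(size P)}) : bool :=
  [&& [forall ij in U, (tnth (in_tuple Q) ij.1).1.2 == (tnth (in_tuple P) ij.2).1.1],
      [forall i : 'I_(size Q), exists j : 'I_(size P), (i, j) \in U] &
      [forall j : 'I_(size P), exists i : 'I_(size Q), (i, j) \in U]].

Definition umaze (X Y Z : finType) (Q : seq (passage X Y)) (P : seq (passage Y Z))
    (U : {set 'I_(size Q) * 'I_(size P)}) : seq (passage X Z) :=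
  [seq ((tnth (in_tuple Q) ij.1).1.1, (tnth (in_tuple P) ij.2).1.2,
        ((tnth (in_tuple P) ij.2).2 * (tnth (in_tuple Q) ij.1).2)%R) | ij <- enum U].

(* A_n applied (linearly) to P o Q = sum_U U *)
Definition An_comp (X Y Z : finType) (Q : seq (passage X Y)) (P : seq (passage Y Z))
    : Hom X Z :=
  (\sum_(U : {set 'I_(size Q) * 'I_(size P)} | lvalid U) An (umaze U))%R.

Definition lid (X : finType) : seq (passage X X) := [seq (x, x, 1%R) | x <- enum X].

End MazeFunctor.

(* Main.v *)
Require Import Defs.
From HB Require Import structures.
From mathcomp Require Import all_boot all_algebra all_fingroup.
Import GRing.Theory.

Set Implicit Arguments. Unset Strict Implicit. Unset Printing Implicit Defensive.

Definition cnt (T : finType) (m : nat) (f : 'I_m -> T) (t : T) : nat :=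
  (\sum_(k < m) (f k == t))%N.

Definition ext (T : Type) m (a : T) (f : 'I_m -> T) : 'I_m.+1 -> T :=
  fun k => if unlift ord0 k is Some k' then f k' else a.

Definition extf (T : finType) m (a : T) (f : 'I_m -> T) : {ffun 'I_m.+1 -> T} :=
  [ffun k => ext a f k].

Lemma ext0 (T : Type) m (a : T) (f : 'I_m -> T) : ext a f ord0 = a.
Proof. by rewrite /ext unlift_none. Qed.

Lemma extS (T : Type) m (a : T) (f : 'I_m -> T) k : ext a f (lift ord0 k) = f k.
Proof. by rewrite /ext liftK. Qed.

Lemma cnt_recl (T : finType) m (f : 'I_m.+1 -> T) t :
  cnt f t = ((f ord0 == t) + cnt (fun k => f (lift ord0 k)) t)%N.
Proof. by rewrite /cnt big_ord_recl. Qed.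

Lemma cnt_ext (T : finType) m (a : T) (f : 'I_m -> T) t :
  cnt (ext a f) t = ((a == t) + cnt f t)%N.
Proof. by rewrite cnt_recl ext0; congr (_ + _)%N; apply: eq_bigr => k _; rewrite extS. Qed.

Lemma cnt_extf (T : finType) m (a : T) (f : 'I_m -> T) t :
  cnt (extf a f) t = ((a == t) + cnt f t)%N.
Proof. by rewrite -cnt_ext; apply: eq_bigr => k _; rewrite ffunE. Qed.

Lemma sum_ffunS (T : finType) m (F : {ffun 'I_m.+1 -> T} -> nat) :
  (\sum_(f : {ffun 'I_m.+1 -> T}) F f =
   \sum_(a : T) \sum_(f : {ffun 'I_m -> T}) F (extf a f))%N.
Proof.
rewrite pair_bigA /=.
rewrite (reindex (fun p : T * {ffun 'I_m -> T} => extf p.1 p.2)) //=.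
exists (fun f : {ffun 'I_m.+1 -> T} => (f ord0, [ffun k => f (lift ord0 k)])).
- move=> [a f] _ /=; rewrite /extf ffunE ext0; congr (_, _).
  by apply/ffunP => k; rewrite !ffunE extS.
- move=> f _ /=; apply/ffunP => k; rewrite /extf !ffunE /ext.
  by case: unliftP => [j ->|->]; rewrite ?ffunE.
Qed.

Lemma sum_eq_pred (T : finType) (P : pred T) (a : T) :
  (\sum_(t | P t) (a == t) = P a)%N.
Proof.
case Pa: (P a).
  rewrite (bigD1 a) //= eqxx big1 // => t /andP[_ /negbTE].
  by rewrite eq_sym => ->.
by rewrite big1 // => t Pt; case: eqP Pt => // <-; rewrite Pa.
Qed.

Lemma sumn_mkcond (I : finType) (P : pred I) (F : I -> nat) :
  (\sum_(i | P i) F i = \sum_i (if P i then F i else 0))%N.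
Proof. exact: big_mkcond. Qed.

Section Count.
Variables (A B : finType) (pi : A -> B).

Definition Ncnt m (h : 'I_m -> B) (K : A -> nat) : nat :=
  (\sum_(f : {ffun 'I_m -> A} | [forall k, pi (f k) == h k] &&
                               [forall a, cnt f a == K a]) 1)%N.

Lemma Ncnt_step m (h : 'I_m.+1 -> B) K :
  Ncnt h K = (\sum_(a | (pi a == h ord0) && (0 < K a))
                Ncnt (fun k => h (lift ord0 k)) (fun t => K t - (a == t)))%N.
Proof.
rewrite /Ncnt [LHS]sumn_mkcond sum_ffunS.
rewrite /= [RHS]sumn_mkcond; apply: eq_bigr => a _.
case: ifP => Ha.
  move/andP: Ha => [/eqP Hpa HKa]; rewrite [RHS]sumn_mkcond; apply: eq_bigr => f _.
  congr (if _ then _ else _); congr (_ && _).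
    apply/forallP/forallP => H k.
      by have := H (lift ord0 k); rewrite ffunE extS.
    by rewrite ffunE /ext; case: unliftP => [j ->|->]; [exact: H | rewrite Hpa].
  apply/forallP/forallP => H t; have := H t; rewrite ?cnt_extf => /eqP E.
    by rewrite -E addKn.
  rewrite E subnKC //; case: eqP => // <-; exact: HKa.
apply: big1 => f _; case: ifP => // /andP [H1 H2]; exfalso.
move/negbT: Ha; rewrite negb_and -leqNgt leqn0 => /orP [/negP Hn|].
  by apply: Hn; have := forallP H1 ord0; rewrite ffunE ext0.
by move/eqP => Ka; have := forallP H2 a; rewrite cnt_extf eqxx Ka.
Qed.

Lemma fact_split (K : A -> nat) a : 0 < K a ->
  (\prod_t (K t)`! = K a * \prod_t (K t - (a == t))`!)%N.
Proof.
move=> HKa; rewrite (bigD1 a) //= [in RHS](bigD1 a) //= eqxx subn1.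
have Ef : (K a)`! = (K a * (K a).-1`!)%N by case: (K a) HKa => // k _; rewrite factS.
rewrite Ef -mulnA; congr (_ * (_ * _))%N.
by apply: eq_bigr => t; rewrite eq_sym => /negbTE ->; rewrite subn0.
Qed.

Lemma Ncnt_prod m : forall (h : 'I_m -> B) (K : A -> nat),
  (forall b, \sum_(a | pi a == b) K a = cnt h b)%N ->
  (Ncnt h K * \prod_a (K a)`! = \prod_b (cnt h b)`!)%N.
Proof.
elim: m => [|m IH] h K HK.
  have K0 : forall a, K a = 0%N.
    move=> a; apply/eqP; have := HK (pi a); rewrite /cnt big_ord0 => /eqP.
    by rewrite sum_nat_eq0 => /forallP /(_ a); rewrite eqxx.
  have C0 : forall b, cnt h b = 0%N by move=> b; rewrite /cnt big_ord0.
  rewrite (eq_bigr (fun _ => 1%N)); last by move=> a _; rewrite K0.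
  rewrite [RHS](eq_bigr (fun _ => 1%N)); last by move=> b _; rewrite C0.
  rewrite !big1_eq muln1.
  rewrite /Ncnt (eq_bigl xpredT); first by rewrite sum1_card card_ffun card_ord.
  move=> f /=; apply/andP; split; first by apply/forallP => -[].
  by apply/forallP => a; rewrite /cnt big_ord0 K0.
pose h' := fun k => h (lift ord0 k).
rewrite Ncnt_step big_distrl /=.
rewrite (eq_bigr (fun a => \prod_b (cnt h' b)`! * K a)%N); last first.
  move=> a /andP [/eqP Hpa HKa]; rewrite (fact_split HKa) mulnCA IH.
    by rewrite mulnC.
  move=> b; rewrite sumnB; last by move=> t _; case: eqP => // <-.
  by rewrite HK sum_eq_pred cnt_recl Hpa addKn.
rewrite -big_distrr /=.
have -> : (\sum_(a | (pi a == h ord0) && (0 < K a)) K a = cnt h (h ord0))%N.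
  rewrite -HK [RHS](bigID (fun a => 0 < K a)) /= [X in _ = (_ + X)%N]big1 ?addn0 //.
  by move=> a /andP [_]; rewrite -leqNgt leqn0 => /eqP.
rewrite [RHS](bigD1 (h ord0)) //= [X in (X * _)%N](bigD1 (h ord0)) //=.
rewrite cnt_recl eqxx add1n factS -/h'.
rewrite (eq_bigr (fun b => (cnt h b)`!)); last first.
  by move=> b /negbTE Hb; rewrite cnt_recl eq_sym Hb.
by rewrite mulnC mulnA.
Qed.

End Count.

Lemma cnt_le (T : finType) m (f : 'I_m -> T) t : (cnt f t <= m)%N.
Proof.
rewrite /cnt -[X in (_ <= X)%N]card_ord -sum1_card.
by apply: leq_sum => k _; exact: leq_b1.
Qed.

Definition cntI (T : finType) m (f : 'I_m -> T) : {ffun T -> 'I_m.+1} :=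
  [ffun t => inord (cnt f t)].

Lemma cntIE (T : finType) m (f : 'I_m -> T) t : (cntI f t : nat) = cnt f t.
Proof. by rewrite ffunE inordK // ltnS cnt_le. Qed.

Lemma cnt_push (A B : finType) (pi : A -> B) m (f : 'I_m -> A) b :
  (\sum_(a | pi a == b) cnt f a = cnt (fun k => pi (f k)) b)%N.
Proof.
rewrite /cnt exchange_big /=; apply: eq_bigr => k _.
exact: (sum_eq_pred (fun a => pi a == b)).
Qed.

Lemma cnt_total (T : finType) m (f : 'I_m -> T) : (\sum_t cnt f t = m)%N.
Proof.
rewrite /cnt exchange_big /= -[RHS]card_ord -sum1_card; apply: eq_bigr => k _.
exact: (sum_eq_pred xpredT).
Qed.

Lemma sum_lifts_cnt (R : nmodType) (A B : finType) (pi : A -> B) m (h : 'I_m -> B)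
    (G : {ffun A -> 'I_m.+1} -> R) :
  (\sum_(f : {ffun 'I_m -> A} | [forall k, pi (f k) == h k]) G (cntI f) =
   \sum_(K : {ffun A -> 'I_m.+1} |
           [forall b, (\sum_(a | pi a == b) (K a : nat))%N == cnt h b])
      G K *+ Ncnt pi h (fun a => K a : nat))%R.
Proof.
rewrite (partition_big (fun f : {ffun 'I_m -> A} => cntI f)
   (fun K : {ffun A -> 'I_m.+1} => [forall b, (\sum_(a | pi a == b) (K a : nat))%N == cnt h b])).
  apply: eq_bigr => K _.
  rewrite (eq_bigr (fun _ => G K)); last by move=> f /andP [_ /eqP ->].
  rewrite sumr_const /Ncnt sum1_card; congr (_ *+ _)%R; apply: eq_card => f.
  rewrite -!topredE /=; congr (_ && _); apply/eqP/forallP => [<- a|H].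
    by rewrite cntIE.
  by apply/ffunP => a; apply/val_inj; rewrite /= cntIE; apply/eqP.
move=> f /forallP Hf; apply/forallP => b.
rewrite (eq_bigr (fun a => cnt f a)); last by move=> a _; rewrite cntIE.
rewrite cnt_push; apply/eqP; apply: eq_bigr => k _.
by rewrite (eqP (Hf k)).
Qed.

Lemma Ncnt_div (A B : finType) (pi : A -> B) m (h : 'I_m -> B) (K : A -> nat) :
  (forall b, \sum_(a | pi a == b) K a = cnt h b)%N ->
  Ncnt pi h K = ((\prod_b (cnt h b)`!) %/ (\prod_a (K a)`!))%N.
Proof.
move=> HK; rewrite -(Ncnt_prod HK) mulnK //.
by rewrite prodn_gt0 // => a; rewrite fact_gt0.
Qed.

Lemma cnt_card (T : finType) m (f : 'I_m -> T) t : cnt f t = #|[pred k | f k == t]|.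
Proof. by rewrite /cnt -sum1_card [RHS]big_mkcond /=; apply: eq_bigr. Qed.

Lemma prod_cnt (R : comPzRingType) (T : finType) m (f : 'I_m -> T) (F : T -> R) :
  (\prod_k F (f k) = \prod_t F t ^+ cnt f t)%R.
Proof.
rewrite (partition_big f predT) //=; apply: eq_bigr => t _.
rewrite (eq_bigr (fun _ => F t)); last by move=> k /eqP ->.
by rewrite prodr_const cnt_card.
Qed.

Lemma surj_cnt (T : finType) m (f : 'I_m -> T) :
  [forall t, exists k, f k == t] = [forall t, 0 < cnt f t]%N.
Proof.
apply/forallP/forallP => H t; rewrite ?cnt_card.
  by have/existsP [k Hk] := H t; apply/card_gt0P; exists k.
by have := H t; rewrite cnt_card => /card_gt0P [k Hk]; apply/existsP; exists k.
Qed.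

Section GA.
Variables (R : comPzRingType) (n : nat).

Definition GA (X Y : finType) (I : finType) (e : I -> passage R X Y) (g : 'I_n -> X * Y) : R :=
  (\sum_(f : {ffun 'I_n -> I} | [forall k, (e (f k)).1 == g k] && [forall i, exists k, f k == i])
     \prod_k (e (f k)).2)%R.

Lemma An_GA (X Y : finType) (P : seq (passage R X Y)) (mu : multation n X Y)
    (g : 'I_n -> X * Y) :
  (forall xy, cnt g xy = val mu xy) -> An n P mu = GA (tnth (in_tuple P)) g.
Proof.
move=> Hg; set e := tnth (in_tuple P).
pose pi := fun i => (e i).1.
pose G := fun K : {ffun 'I_(size P) -> 'I_n.+1} =>
  (if [forall i, 0 < (K i : nat)]%N then \prod_i (e i).2 ^+ (K i : nat) else 0)%R.
have -> : GA e g = (\sum_(f : {ffun 'I_n -> 'I_(size P)} | [forall k, pi (f k) == g k])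
                     G (cntI f))%R.
  rewrite /GA big_mkcondr [LHS]big_mkcond [RHS]big_mkcond /=; apply: eq_bigr => f _.
  rewrite /G; case: ifP => // _.
  rewrite surj_cnt.
  have -> : [forall i, 0 < (cntI f i : nat)]%N = [forall t, 0 < cnt f t]%N.
    by apply: eq_forallb => i; rewrite cntIE.
  case: ifP => // _; rewrite (prod_cnt f (fun i => (e i).2)).
  by apply: eq_bigr => i _; rewrite cntIE.
rewrite sum_lifts_cnt ffunE big_mkcond [RHS]big_mkcond /=; apply: eq_bigr => d _.
have E1 : agrees (dmult d) mu = [forall b, \sum_(a | pi a == b) (d a : nat) == cnt g b]%N.
  by apply: eq_forallb => b; rewrite Hg.
rewrite E1; case Hc: [forall b, _]; last by rewrite !andbF.
have Hsum : (\sum_i (d i : nat) = n)%N.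
  transitivity (\sum_b cnt g b)%N; last exact: cnt_total.
  rewrite (partition_big pi predT) //=; apply: eq_bigr => b _.
  by apply/eqP; move/forallP: Hc; apply.
rewrite Hsum eqxx andbT andbT /G; case: ifP => _; last by rewrite mul0rn.
rewrite -[in RHS]mulr_natr; congr (_ * _)%R; congr (_%:R)%R.
have HK : forall b, (\sum_(a | pi a == b) (d a : nat) = cnt g b)%N.
  by move=> b; apply/eqP; move/forallP: Hc; apply.
rewrite (Ncnt_div HK) /dcoef; congr (_ %/ _)%N; apply: eq_bigr => b _.
by rewrite -HK.
Qed.

End GA.

Lemma exists_labeling (T : finType) m : forall (mu : T -> nat),
  (\sum_t mu t = m)%N -> exists g : 'I_m -> T, forall t, cnt g t = mu t.
Proof.
elim: m => [|m IH] mu Hmu.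
  have g0 : 'I_0 -> T by case=> k; rewrite ltn0.
  exists g0 => t; rewrite /cnt big_ord0; apply/esym/eqP.
  by move/eqP: Hmu; rewrite sum_nat_eq0 => /forallP /(_ t).
case: (pickP (fun t => 0 < mu t)%N) => [t0 Ht0|H0]; last first.
  by move: Hmu; rewrite big1 // => t _; apply/eqP; rewrite -leqn0 leqNgt H0.
have Hs : (\sum_t (mu t - (t0 == t)) = m)%N.
  rewrite sumnB; last by move=> t _; case: eqP => // <-.
  have -> : (\sum_t (t0 == t) = 1)%N.
    by rewrite (bigD1 t0) //= eqxx big1 // => t; rewrite eq_sym => /negbTE ->.
  by rewrite Hmu subn1.
have [g' Hg'] := IH _ Hs.
exists (ext t0 g') => t; rewrite cnt_ext Hg' subnKC //.
by case: eqP => // <-.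
Qed.

Lemma sum_ffun_inj (V : nmodType) (I J : finType) (s : I -> J) m
    (F : {ffun 'I_m -> J} -> V) :
  injective s ->
  (\sum_(f : {ffun 'I_m -> I}) F [ffun k => s (f k)] =
   \sum_(H : {ffun 'I_m -> J} | [forall k, H k \in codom s]) F H)%R.
Proof.
move=> sinj.
rewrite (partition_big (fun f : {ffun 'I_m -> I} => [ffun k => s (f k)])
   (fun H : {ffun 'I_m -> J} => [forall k, H k \in codom s])); last first.
  by move=> f _; apply/forallP => k; rewrite ffunE codom_f.
apply: eq_bigr => H /forallP HP.
pose f0 := [ffun k => iinv (HP k)].
have Hf0 : [ffun k => s (f0 k)] = H by apply/ffunP => k; rewrite !ffunE f_iinv.
rewrite (big_pred1 f0) ?Hf0 // => f /=.
rewrite -Hf0; apply/eqP/eqP => [E|->] //; apply/ffunP => k; apply: sinj.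
by have := congr1 (fun g : {ffun 'I_m -> J} => g k) E; rewrite !ffunE.
Qed.

Lemma GA_bij (R : comPzRingType) n (X Y I J : finType) (s : I -> J)
    (e : I -> passage R X Y) (e' : J -> passage R X Y) (g : 'I_n -> X * Y) :
  injective s -> (forall j, j \in codom s) -> (forall i, e' (s i) = e i) ->
  GA e' g = GA e g.
Proof.
move=> sinj sonto He; rewrite /GA big_mkcond [RHS]big_mkcond /=.
pose F := fun H : {ffun 'I_n -> J} =>
  (if [forall k, (e' (H k)).1 == g k] && [forall i, exists k, H k == i]
   then \prod_k (e' (H k)).2 else 0)%R.
transitivity (\sum_(f : {ffun 'I_n -> I}) F [ffun k => s (f k)])%R.
  rewrite sum_ffun_inj //; apply: eq_bigl => H; apply/esym/forallP => k; exact: sonto.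
apply: eq_bigr => f _; rewrite /F.
have -> : [forall k, (e' ([ffun k => s (f k)] k)).1 == g k] = [forall k, (e (f k)).1 == g k].
  by apply: eq_forallb => k; rewrite ffunE He.
have -> : [forall i, exists k, [ffun k => s (f k)] k == i] = [forall i, exists k, f k == i].
  apply/forallP/forallP => H i.
    have/existsP [k /eqP Hk] := H (s i); apply/existsP; exists k.
    by rewrite ffunE in Hk; rewrite (sinj _ _ Hk).
  have/codomP [i0 ->] := sonto i.
  have/existsP [k /eqP Hk] := H i0; apply/existsP; exists k.
  by rewrite ffunE Hk.
case: ifP => // _; apply: eq_bigr => k _; by rewrite ffunE He.
Qed.

Lemma multation_sum n (X Y : finType) (mu : multation n X Y) :
  (\sum_xy (val mu xy : nat) = n)%N.
Proof. by case/and3P: (valP mu) => /eqP. Qed.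

Lemma An_perm (R : comPzRingType) n (X Y : finType) (P P' : seq (passage R X Y)) :
  perm_eq P P' -> An n P = An n P'.
Proof.
move=> pP; apply/ffunP => mu.
have [g Hg] := exists_labeling (multation_sum mu).
rewrite (An_GA P Hg) (An_GA P' Hg).
have pP2 : perm_eq P' (in_tuple P) by rewrite perm_sym.
case/tuple_permP: pP2 => p EP'.
have Hsz : size P = size P' by rewrite EP' size_tuple.
pose s := fun i : 'I_(size P) => cast_ord Hsz ((p^-1)%g i).
have sinj : injective s by move=> i j /cast_ord_inj /perm_inj.
symmetry; apply: (GA_bij (s := s)) => //.
  by apply: inj_card_onto => //; rewrite !card_ord Hsz.
move=> i; rewrite (tnth_nth (tnth (in_tuple P) i)) /=.
rewrite EP' -(tnth_nth _ [tuple tnth (in_tuple P) (p i0) | i0 < size P]) tnth_mktuple.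
by rewrite permKV.
Qed.

Lemma sum_option (V : nmodType) (I : finType) (F : option I -> V) :
  (\sum_o F o = F None + \sum_i F (Some i))%R.
Proof.
rewrite (bigD1 None) //=; congr (_ + _)%R.
rewrite -[RHS](big_imset _ (h := Some) (A := predT)) /=; last by move=> i j _ _ [].
apply: eq_bigl => -[i|] /=; first by rewrite imset_f.
by apply/esym/imsetP => -[].
Qed.

Lemma prod_if (R : comPzRingType) (T : finType) (c : T -> bool) (v : T -> R) :
  (\prod_t (if c t then v t else 0) = if [forall t, c t] then \prod_t v t else 0)%R.
Proof.
case: ifP => [/forallP H|/negbT]; first by apply: eq_bigr => t _; rewrite H.
rewrite negb_forall => /existsP [t /negbTE Ht].
by rewrite (bigD1 t) //= Ht mul0r.
Qed.

Lemma sum_if_eq (V : nmodType) (T : finType) (C : pred T) (f0 : T) (v : V) :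
  (\sum_(f | C f) (if f == f0 then v else 0) = if C f0 then v else 0)%R.
Proof.
rewrite -big_mkcondr /=; case: ifP => Cf0.
  by rewrite (big_pred1 f0) // => f /=; case: eqP => [->|]; rewrite ?Cf0 ?andbF.
by rewrite big_pred0 // => f /=; case: eqP => [->|]; rewrite ?Cf0 ?andbF.
Qed.

Section Split.
Variables (R : comPzRingType) (n : nat) (X Y I : finType) (i0 : I)
  (e : I -> passage R X Y) (x : X) (y : Y) (g : 'I_n -> X * Y) (a b : R).

Definition eset (c : R) := fun i => if i == i0 then (x, y, c) else e i.
Definition e2 := fun o : option I => if o is Some i then eset a i else (x, y, b).
Definition coll (o : option I) : I := if o is Some i then i else i0.

Lemma eset_fst c c' i : (eset c i).1 = (eset c' i).1.
Proof. by rewrite /eset; case: ifP. Qed.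

Lemma e2_fst c o : (e2 o).1 = (eset c (coll o)).1.
Proof. by case: o => [i|] /=; [apply: eset_fst | rewrite /eset eqxx]. Qed.

Definition T2 (f2 : {ffun 'I_n -> option I}) := (\prod_k (e2 (f2 k)).2)%R.
Definition lift2 (f2 : {ffun 'I_n -> option I}) := [forall k, (e2 (f2 k)).1 == g k].
Definition surjc (f2 : {ffun 'I_n -> option I}) := [forall i, exists k, coll (f2 k) == i].

Lemma GA_ab : GA (eset (a + b)) g =
  (\sum_(f2 : {ffun 'I_n -> option I}) if lift2 f2 && surjc f2 then T2 f2 else 0)%R.
Proof.
have pt : forall i, (eset (a + b) i).2 =
    (\sum_o (if coll o == i then (e2 o).2 else 0))%R.
  move=> i; rewrite sum_option /= -big_mkcond big_pred1_eq /eset.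
  by rewrite eq_sym; case: eqP => _ /=; rewrite ?add0r // addrC.
rewrite /GA.
transitivity (\sum_(f : {ffun 'I_n -> I} | [forall k, (eset (a + b) (f k)).1 == g k] &&
                                          [forall i, exists k, f k == i])
   \sum_(f2 : {ffun 'I_n -> option I})
      (if f == [ffun k => coll (f2 k)] then T2 f2 else 0))%R.
  apply: eq_bigr => f _; rewrite (eq_bigr _ (fun k _ => pt (f k))) bigA_distr_bigA /=.
  apply: eq_bigr => f2 _; rewrite prod_if.
  have -> : [forall k, coll (f2 k) == f k] = (f == [ffun k => coll (f2 k)]).
    apply/forallP/eqP => [H|-> k]; last by rewrite ffunE.
    by apply/ffunP => k; rewrite ffunE (eqP (H k)).
  by [].
rewrite exchange_big /=; apply: eq_bigr => f2 _; rewrite sum_if_eq.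
congr (if _ && _ then _ else _).
  by apply: eq_forallb => k; rewrite ffunE (e2_fst (a + b)).
by apply: eq_forallb => i; apply: eq_existsb => k; rewrite ffunE.
Qed.

Lemma codom_Some (o : option I) : (o \in codom Some) = (o != None).
Proof. by case: o => [i|]; [rewrite codom_f | apply/codomP => -[]]. Qed.

Definition sb (i : I) : option I := if i == i0 then None else Some i.

Lemma sb_inj : injective sb.
Proof.
move=> i j; rewrite /sb; case: eqP => [->|Hi]; case: eqP => [->|Hj] //.
by case.
Qed.

Lemma codom_sb (o : option I) : (o \in codom sb) = (o != Some i0).
Proof.
case: o => [i|]; last by rewrite -(_ : sb i0 = None) ?codom_f // /sb eqxx.
case: (eqVneq i i0) => [->|Hi].
  rewrite eqxx; apply/negP => /codomP [j]; rewrite /sb; case: eqP => // Hj [] Hji.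
  by apply: Hj.
have -> : (Some i != Some i0) = true by exact: Hi.
by apply/codomP; exists i; rewrite /sb (negbTE Hi).
Qed.

Lemma GA_a : GA (eset a) g =
  (\sum_(f2 : {ffun 'I_n -> option I})
     if [forall k, f2 k != None] && (lift2 f2 && surjc f2) then T2 f2 else 0)%R.
Proof.
pose F' := fun f2 : {ffun 'I_n -> option I} => (if lift2 f2 && surjc f2 then T2 f2 else 0)%R.
rewrite /GA big_mkcond /=.
transitivity (\sum_(f : {ffun 'I_n -> I}) F' [ffun k => Some (f k)])%R.
  apply: eq_bigr => f _; rewrite /F' /lift2 /surjc /T2.
  congr (if _ && _ then _ else _).
  - by apply: eq_forallb => k; rewrite ffunE.
  - by apply: eq_forallb => i; apply: eq_existsb => k; rewrite ffunE.
  - by apply: eq_bigr => k _; rewrite ffunE.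
rewrite sum_ffun_inj; last by move=> i j [].
rewrite big_mkcond; apply: eq_bigr => f2 _.
rewrite (eq_forallb (fun k => codom_Some (f2 k))) /F'.
by case: ifP.
Qed.

Lemma GA_b : GA (eset b) g =
  (\sum_(f2 : {ffun 'I_n -> option I})
     if [forall k, f2 k != Some i0] && (lift2 f2 && surjc f2) then T2 f2 else 0)%R.
Proof.
pose F' := fun f2 : {ffun 'I_n -> option I} => (if lift2 f2 && surjc f2 then T2 f2 else 0)%R.
have Hs : forall i, e2 (sb i) = eset b i.
  by move=> i; rewrite /sb; case: eqP => [->|/eqP Hi] /=; rewrite /eset ?eqxx ?(negbTE Hi).
have Hc : forall i, coll (sb i) = i.
  by move=> i; rewrite /sb; case: eqP.
rewrite /GA big_mkcond /=.
transitivity (\sum_(f : {ffun 'I_n -> I}) F' [ffun k => sb (f k)])%R.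
  apply: eq_bigr => f _; rewrite /F' /lift2 /surjc /T2.
  congr (if _ && _ then _ else _).
  - by apply: eq_forallb => k; rewrite ffunE Hs.
  - by apply: eq_forallb => i; apply: eq_existsb => k; rewrite ffunE Hc.
  - by apply: eq_bigr => k _; rewrite ffunE Hs.
rewrite sum_ffun_inj; last exact: sb_inj.
rewrite big_mkcond; apply: eq_bigr => f2 _.
rewrite (eq_forallb (fun k => codom_sb (f2 k))) /F'.
by case: ifP.
Qed.

Lemma GA_e2 : GA e2 g =
  (\sum_(f2 : {ffun 'I_n -> option I})
     if lift2 f2 && [forall o, exists k, f2 k == o] then T2 f2 else 0)%R.
Proof. by rewrite /GA big_mkcond. Qed.

Lemma GA_split : GA (eset (a + b)) g = (GA (eset a) g + GA (eset b) g + GA e2 g)%R.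
Proof.
rewrite GA_ab GA_a GA_b GA_e2 -!big_split /=; apply: eq_bigr => f2 _.
set hN := [exists k, f2 k == None].
set hS := [exists k, f2 k == Some i0].
have F1 : [forall o, exists k, f2 k == o] = [&& surjc f2, hN & hS].
  apply/idP/idP.
    move/forallP => H; apply/and3P; split.
    - apply/forallP => i; have/existsP [k /eqP Hk] := H (Some i).
      by apply/existsP; exists k; rewrite Hk.
    - exact: H None.
    - exact: H (Some i0).
  case/and3P => /forallP Hs HN HS; apply/forallP => -[i|] //.
  case: (eqVneq i i0) => [->|Hi] //.
  have/existsP [k /eqP Hk] := Hs i; apply/existsP; exists k.
  by move: Hk; case: (f2 k) => [j /= ->|/= Hi0] //; rewrite Hi0 eqxx in Hi.
have F2 : surjc f2 -> hN || hS.
  move/forallP/(_ i0)/existsP => [k /eqP]; case E: (f2 k) => [j|] /= Hj.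
    by apply/orP; right; apply/existsP; exists k; rewrite E Hj.
  by apply/orP; left; apply/existsP; exists k; rewrite E.
rewrite F1 -!negb_exists -/hN -/hS.
case: (lift2 f2) => /=; last by rewrite !andbF !addr0.
case: (boolP (surjc f2)) => Hs /=; last by rewrite !andbF !addr0.
move: (F2 Hs); clear F1 F2; case: hN; case: hS => //= _.
- by rewrite !add0r.
- by rewrite addr0 add0r.
- by rewrite !addr0.
Qed.

End Split.

Lemma An_zero (R : comPzRingType) n (X Y : finType) (P : seq (passage R X Y)) (x : X) (y : Y) :
  An n (rcons P (x, y, 0%R)) = 0%R.
Proof.
apply/ffunP => mu; rewrite !ffunE; apply: big1 => d /and3P [/forallP Hpos _ _].
have Hi : size P < size (rcons P (x, y, 0%R)) by rewrite size_rcons.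
rewrite (bigD1 (Ordinal Hi)) //= (tnth_nth (x, y, 0%R)) /= nth_rcons ltnn eqxx /= expr0n.
by have := Hpos (Ordinal Hi); rewrite lt0n => /negbTE ->; rewrite !mul0r.
Qed.

Section Lists.
Variables (R : comPzRingType) (n : nat) (X Y : finType) (P : seq (passage R X Y)) (x : X) (y : Y).

Definition ePo (o : option 'I_(size P)) : passage R X Y :=
  if o is Some i then tnth (in_tuple P) i else (x, y, 0%R).

Lemma rcons_GA (c : R) (g : 'I_n -> X * Y) :
  GA (tnth (in_tuple (rcons P (x, y, c)))) g = GA (eset None ePo x y c) g.
Proof.
have Hsz : (size P).+1 = size (rcons P (x, y, c)) by rewrite size_rcons.
pose v := fun o : option 'I_(size P) => if o is Some i then (i : nat) else size P.
have vlt : forall o, v o < (size P).+1.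
  by case=> [i|] /=; rewrite ltnS // ltnW.
pose s := fun o => cast_ord Hsz (inord (v o) : 'I_(size P).+1).
have sinj : injective s.
  move=> o1 o2 /cast_ord_inj /(congr1 val) /=; rewrite !inordK //.
  case: o1 {vlt} => [i|]; case: o2 => [j|] //= E.
  - by congr Some; apply: val_inj.
  - by move: (ltn_ord i); rewrite E ltnn.
  - by move: (ltn_ord j); rewrite -E ltnn.
apply: (GA_bij (s := s)) => //.
  by apply: inj_card_onto => //; rewrite card_option !card_ord Hsz.
move=> o; rewrite (tnth_nth (x, y, c)) /= inordK // nth_rcons.
case: o => [i|] /=; last by rewrite ltnn eqxx /eset eqxx.
by rewrite ltn_ord /eset /= (tnth_nth (x, y, c)).
Qed.

Lemma cat_GA (a b : R) (g : 'I_n -> X * Y) :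
  GA (tnth (in_tuple (P ++ [:: (x, y, a); (x, y, b)]))) g = GA (e2 None ePo x y a b) g.
Proof.
have Hsz : (size P).+2 = size (P ++ [:: (x, y, a); (x, y, b)]) by rewrite size_cat addn2.
pose v := fun o : option (option 'I_(size P)) =>
  match o with None => (size P).+1 | Some None => size P | Some (Some i) => (i : nat) end.
have vlt : forall o, v o < (size P).+2.
  case=> [[i|]|] /=; last exact: ltnSn.
    by apply: (leq_trans (ltn_ord i)); exact: leqW (leqW (leqnn _)).
  by rewrite ltnS leqnSn.
pose s := fun o => cast_ord Hsz (inord (v o) : 'I_(size P).+2).
have sinj : injective s.
  move=> o1 o2 /cast_ord_inj /(congr1 val) /=; rewrite !inordK //.
  case: o1 {vlt} => [[i|]|]; case: o2 => [[j|]|] //= E.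
  - by congr (Some (Some _)); apply: val_inj.
  - by move: (ltn_ord i); rewrite E ltnn.
  - by move: (ltn_ord i); rewrite E ltnNge leqnSn.
  - by move: (ltn_ord j); rewrite -E ltnn.
  - by case: (n_Sn _ E).
  - by move: (ltn_ord j); rewrite -E ltnNge leqnSn.
  - by case: (n_Sn _ (esym E)).
apply: (GA_bij (s := s)) => //.
  by apply: inj_card_onto => //; rewrite !card_option !card_ord Hsz.
move=> o; rewrite (tnth_nth (x, y, a)) /= inordK // nth_cat.
case: o => [[i|]|] /=.
- by rewrite ltn_ord /eset /= (tnth_nth (x, y, a)).
- by rewrite ltnn subnn /eset.
- by rewrite ltnNge leqnSn /= subSnn.
Qed.

End Lists.

Lemma An_add (R : comPzRingType) n (X Y : finType) (P : seq (passage R X Y)) (x : X) (y : Y) (a b : R) :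
  An n (rcons P (x, y, (a + b)%R)) =
    (An n (rcons P (x, y, a)) + An n (rcons P (x, y, b))
     + An n (P ++ [:: (x, y, a); (x, y, b)]))%R.
Proof.
apply/ffunP => mu; have [g Hg] := exists_labeling (multation_sum mu).
have E : forall f1 f2 : {ffun multation n X Y -> R}, (f1 + f2)%R mu = (f1 mu + f2 mu)%R.
  by move=> f1 f2; rewrite ffunE.
rewrite !E !(An_GA _ Hg) !rcons_GA cat_GA.
exact: GA_split.
Qed.

Lemma sum_pos_ex (T : finType) (F : T -> nat) : (0 < \sum_t F t)%N -> exists t, (0 < F t)%N.
Proof.
rewrite lt0n sum_nat_eq0 negb_forall => /existsP [t Ht].
by exists t; rewrite lt0n.
Qed.

Lemma cnt_pos (T : finType) m (g : 'I_m -> T) t : (0 < cnt g t)%N -> exists k, g k = t.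
Proof. by rewrite cnt_card => /card_gt0P [k /eqP Hk]; exists k. Qed.

Lemma cnt_hit (T : finType) m (g : 'I_m -> T) k : (0 < cnt g (g k))%N.
Proof. by rewrite cnt_card; apply/card_gt0P; exists k; rewrite inE. Qed.

Lemma An_id (R : comPzRingType) n (X : finType) : An n (lid R X) = mid R n X.
Proof.
apply/ffunP => mu; have [g Hg] := exists_labeling (multation_sum mu).
rewrite (An_GA _ Hg).
pose e := fun x : X => (x, x, 1%R) : passage R X X.
have Hsz : #|X| = size (lid R X) by rewrite size_map cardE.
pose s := fun x : X => cast_ord Hsz (enum_rank x).
have sinj : injective s by move=> x1 x2 /cast_ord_inj /enum_rank_inj.
rewrite (GA_bij (s := s) (e := e)) //; first last.
- move=> x; rewrite (tnth_nth (e x)) /= (nth_map x) ?nth_enum_rank //.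
  by rewrite -cardE ltn_ord.
- by apply: inj_card_onto => //; rewrite card_ord Hsz.
rewrite ffunE /GA.
case: ifP => [/forallP Hd|/negbT].
  have gdiag : forall k, g k = ((g k).1, (g k).1).
    move=> k; have := Hd (g k); have := cnt_hit g k; rewrite Hg.
    case: (g k) => u v /= Hp; rewrite lt0n in Hp.
    by case: eqP => [->|_] //= /eqP Hz; rewrite Hz eqxx in Hp.
  pose f0 := [ffun k => (g k).1].
  rewrite (big_pred1 f0); first by rewrite big1.
  move=> f /=; apply/idP/eqP.
    case/andP => /forallP H _; apply/ffunP => k; rewrite ffunE.
    by have := H k; rewrite /e /= => /eqP <-.
  move=> ->; apply/andP; split.
    by apply/forallP => k; rewrite /e ffunE /= -gdiag.
  apply/forallP => x; case/and3P: (valP mu) => _ /forallP /(_ x) Hr _.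
  have [y Hy] := sum_pos_ex Hr.
  have Hxy : x = y.
    have := Hd (x, y); rewrite /=; case: eqP => // _ /= /eqP Hz.
    by move: Hy; rewrite /= Hz.
  rewrite -Hg in Hy; have [k Hk] := cnt_pos Hy.
  by apply/existsP; exists k; rewrite ffunE Hk.
rewrite negb_forall => /existsP [[u v]]; rewrite negb_imply /= => /andP [Huv Hz].
rewrite big_pred0 // => f; apply/negP => /andP [/forallP H _].
have [k Hk] : exists k, g k = (u, v).
  by apply: cnt_pos; rewrite Hg lt0n.
have := H k; rewrite Hk /e /= => /eqP [E1 E2].
by rewrite -E1 -E2 eqxx in Huv.
Qed.

Section Fib.
Variables (X Y Z : finType).

Lemma sum_fiber13 (F : X * Y * Z -> nat) (b : X * Z) :
  (\sum_(a | (a.1.1, a.2) == b) F a = \sum_y F (b.1, y, b.2))%N.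
Proof.
rewrite (reindex (fun y => (b.1, y, b.2))) /=.
  by apply: eq_bigl => y; rewrite -surjective_pairing eqxx.
exists (fun a : X * Y * Z => a.1.2) => [y _ //|[[x y] z]].
by rewrite inE => /eqP <-.
Qed.

Lemma sum_fiber12 (F : X * Y * Z -> nat) (b : X * Y) :
  (\sum_(a | (a.1.1, a.1.2) == b) F a = \sum_z F (b.1, b.2, z))%N.
Proof.
rewrite (reindex (fun z => (b.1, b.2, z))) /=.
  by apply: eq_bigl => z; rewrite -surjective_pairing eqxx.
exists (fun a : X * Y * Z => a.2) => [z _ //|[[x y] z]].
by rewrite inE => /eqP <-.
Qed.

Lemma sum_fiber23 (F : X * Y * Z -> nat) (b : Y * Z) :
  (\sum_(a | (a.1.2, a.2) == b) F a = \sum_x F (x, b.1, b.2))%N.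
Proof.
rewrite (reindex (fun x => (x, b.1, b.2))) /=.
  by apply: eq_bigl => x; rewrite -surjective_pairing eqxx.
exists (fun a : X * Y * Z => a.1.1) => [x _ //|[[x y] z]].
by rewrite inE => /eqP <-.
Qed.

Variable (m : nat) (f : 'I_m -> X * Y * Z).

Lemma proj12_cnt xy : proj12 (cntI f) xy = cnt (fun k => ((f k).1.1, (f k).1.2)) xy.
Proof.
rewrite /proj12 -(cnt_push (fun a : X * Y * Z => (a.1.1, a.1.2))) sum_fiber12.
by apply: eq_bigr => z _; rewrite cntIE.
Qed.

Lemma proj23_cnt yz : proj23 (cntI f) yz = cnt (fun k => ((f k).1.2, (f k).2)) yz.
Proof.
rewrite /proj23 -(cnt_push (fun a : X * Y * Z => (a.1.2, a.2))) sum_fiber23.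
by apply: eq_bigr => z _; rewrite cntIE.
Qed.

End Fib.

Definition Aq (R : comPzRingType) n (X Y : finType) (Q : seq (passage R X Y)) (m : X * Y -> nat) : R :=
  (\sum_(nu : multation n X Y | agrees m nu) An n Q nu)%R.

Lemma Aq_ext (R : comPzRingType) n (X Y : finType) (Q : seq (passage R X Y)) (m m' : X * Y -> nat) :
  (forall xy, m xy = m' xy) -> Aq n Q m = Aq n Q m'.
Proof. by move=> E; apply: eq_bigl => nu; apply: eq_forallb => xy; rewrite E. Qed.

Lemma Aq_GA (R : comPzRingType) n (X Y : finType) (Q : seq (passage R X Y)) (g : 'I_n -> X * Y) :
  is_maze Q -> Aq n Q (cnt g) = GA (tnth (in_tuple Q)) g.
Proof.
move=> /andP [/forallP HX /forallP HY].
pose nu0 := [ffun xy => inord (cnt g xy)] : mpairs n X Y.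
have Hnu0 : forall xy, (nu0 xy : nat) = cnt g xy by move=> xy; rewrite ffunE inordK // ltnS cnt_le.
case: (boolP (is_multation nu0)) => Hm.
  rewrite /Aq (big_pred1 (exist _ nu0 Hm)); first by apply: An_GA => xy /=; rewrite -[RHS]/(nat_of_ord (nu0 xy)) Hnu0.
  move=> nu /=; apply/forallP/eqP => [H|->] /=; last by move=> xy; rewrite Hnu0.
  apply/val_inj/ffunP => xy /=; apply/val_inj.
  by rewrite -[RHS]/(nat_of_ord (nu0 xy)) Hnu0; exact/esym/eqP/H.
rewrite /Aq big_pred0; last first.
  move=> nu; apply/negP => /forallP H; move/negP: Hm; apply.
  suff -> : nu0 = val nu by exact: valP.
  apply/ffunP => xy; apply/val_inj.
  by rewrite -[LHS]/(nat_of_ord (nu0 xy)) Hnu0; exact/eqP/H.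
rewrite /GA big_pred0 // => F; apply/negP => /andP [/forallP HF /forallP Hs].
move/negP: Hm; apply; apply/and3P; split.
- apply/eqP; rewrite -[RHS](cnt_total g); apply: eq_bigr => xy _; exact: Hnu0.
- apply/forallP => x; have/hasP [p pQ /eqP Hp] := HX x.
  have [i Hi] : exists i : 'I_(size Q), tnth (in_tuple Q) i = p.
    by have/(nthP p) [i Hi Ei] := pQ; exists (Ordinal Hi); rewrite (tnth_nth p).
  have/existsP [k /eqP Hk] := Hs i.
  rewrite /rowsum (bigD1 p.1.2) //= Hnu0.
  have E : g k = (x, p.1.2).
    by have := HF k; rewrite Hk Hi => /eqP <-; rewrite -Hp -surjective_pairing.
  by rewrite -E ltn_addr // cnt_hit.
- apply/forallP => y; have/hasP [p pQ /eqP Hp] := HY y.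
  have [i Hi] : exists i : 'I_(size Q), tnth (in_tuple Q) i = p.
    by have/(nthP p) [i Hi Ei] := pQ; exists (Ordinal Hi); rewrite (tnth_nth p).
  have/existsP [k /eqP Hk] := Hs i.
  rewrite /colsum (bigD1 p.1.1) //= Hnu0.
  have E : g k = (p.1.1, y).
    by have := HF k; rewrite Hk Hi => /eqP <-; rewrite -Hp -surjective_pairing.
  by rewrite -E ltn_addr // cnt_hit.
Qed.

Section Comp.
Variables (R : comPzRingType) (n : nat) (X Y Z : finType)
  (Q : seq (passage R X Y)) (P : seq (passage R Y Z)) (h : 'I_n -> X * Z).

Local Notation IQ := 'I_(size Q).
Local Notation IP := 'I_(size P).
Local Notation eQ := (tnth (in_tuple Q)).
Local Notation eP := (tnth (in_tuple P)).

Definition phi (ij : IQ * IP) : passage R X Z :=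
  ((eQ ij.1).1.1, (eP ij.2).1.2, ((eP ij.2).2 * (eQ ij.1).2)%R).

Definition wH (H : {ffun 'I_n -> IQ * IP}) : R := (\prod_k (phi (H k)).2)%R.
Definition liftH (H : {ffun 'I_n -> IQ * IP}) := [forall k, (phi (H k)).1 == h k].

Lemma L1 (U : {set IQ * IP}) :
  GA (tnth (in_tuple (umaze U))) h =
  (\sum_(H : {ffun 'I_n -> IQ * IP} | [forall k, H k \in U])
     if liftH H && [forall u in U, exists k, H k == u] then wH H else 0)%R.
Proof.
pose ev := fun j : 'I_#|U| => enum_val j.
have Hsz : #|U| = size (umaze U) by rewrite size_map cardE.
pose s := fun j : 'I_#|U| => cast_ord Hsz j.
have sinj : injective s by move=> i j /cast_ord_inj.
rewrite (GA_bij (s := s) (e := fun j => phi (ev j))) //; first last.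
- move=> j; rewrite (tnth_nth (phi (ev j))) /= (nth_map (ev j)); last first.
    by rewrite -cardE ltn_ord.
  by rewrite -(enum_val_nth (ev j)).
- by move=> j; apply: inj_card_onto => //; rewrite !card_ord Hsz.
pose F' := fun H : {ffun 'I_n -> IQ * IP} =>
  (if liftH H && [forall u in U, exists k, H k == u] then wH H else 0)%R.
rewrite /GA big_mkcond /=.
transitivity (\sum_(f : {ffun 'I_n -> 'I_#|U|}) F' [ffun k => ev (f k)])%R.
  apply: eq_bigr => f _; rewrite /F' /liftH /wH.
  congr (if _ && _ then _ else _).
  - by apply: eq_forallb => k; rewrite ffunE.
  - apply/forallP/forallP => H u.
      apply/implyP => Hu; have/existsP [k /eqP Hk] := H (enum_rank_in Hu u).
      by apply/existsP; exists k; rewrite ffunE Hk /ev enum_rankK_in.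
    have/implyP/(_ (enum_valP u)) /existsP [k /eqP Hk] := H (enum_val u).
    by apply/existsP; exists k; rewrite ffunE in Hk; apply/eqP/enum_val_inj.
  - by apply: eq_bigr => k _; rewrite ffunE.
rewrite sum_ffun_inj; last exact: enum_val_inj.
apply: eq_bigl => H; apply: eq_forallb => k.
apply/codomP/idP => [[j ->]|Hk]; first exact: enum_valP.
by exists (enum_rank_in Hk (H k)); rewrite /ev /= enum_rankK_in.
Qed.

Definition imH (H : {ffun 'I_n -> IQ * IP}) : {set IQ * IP} := [set u | [exists k, H k == u]].

Lemma imH_eq (U : {set IQ * IP}) (H : {ffun 'I_n -> IQ * IP}) :
  ([forall k, H k \in U] && [forall u in U, exists k, H k == u]) = (U == imH H).
Proof.
apply/andP/eqP => [[/forallP H1 /forallP H2]|->].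
  apply/setP => u; rewrite inE; apply/idP/existsP => [Hu|[k /eqP <-]]; last exact: H1.
  by move/implyP: (H2 u) => /(_ Hu) /existsP.
split.
  by apply/forallP => k; rewrite inE; apply/existsP; exists k.
by apply/forallP => u; apply/implyP; rewrite inE.
Qed.

Lemma LHS_eq (rho : multation n X Z) : (forall xz, cnt h xz = val rho xz) ->
  An_comp n Q P rho =
  (\sum_(H : {ffun 'I_n -> IQ * IP}) if lvalid (imH H) && liftH H then wH H else 0)%R.
Proof.
move=> Hh; rewrite /An_comp sum_ffunE.
rewrite (eq_bigr (fun U => \sum_(H : {ffun 'I_n -> IQ * IP})
           if U == imH H then (if liftH H then wH H else 0) else 0))%R; last first.
  move=> U _; rewrite (An_GA _ Hh) L1 big_mkcond /=; apply: eq_bigr => H _.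
  rewrite -imH_eq; case: (boolP [forall k, H k \in U]) => //= _.
  by case: (liftH H); case: [forall u in U, _].
rewrite exchange_big /=; apply: eq_bigr => H _; rewrite sum_if_eq.
by case: (lvalid _); case: (liftH H).
Qed.

Definition GK (K : mtriples n X Y Z) : R := (Aq n Q (proj12 K) * Aq n P (proj23 K))%R.

Lemma R1 (rho : multation n X Z) :
  mcomp (An n Q) (An n P) rho =
  (\sum_(K : mtriples n X Y Z | agrees (proj13 K) rho) (mcoef K)%:R * GK K)%R.
Proof.
rewrite ffunE.
under eq_bigr => nu _ do under eq_bigr => mu _ do rewrite big_mkcond.
under eq_bigr => nu _ do rewrite exchange_big.
rewrite exchange_big /= [RHS]big_mkcond; apply: eq_bigr => K _ /=.
case: (agrees (proj13 K) rho); last first.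
  by rewrite big1 // => nu _; rewrite big1 // => mu _; rewrite !andbF.
rewrite /GK /Aq big_distrl big_distrr [RHS]big_mkcond /=; apply: eq_bigr => nu _.
case: (agrees (proj12 K) nu) => /=; last by rewrite big1.
rewrite big_distrr big_distrr [RHS]big_mkcond /=; apply: eq_bigr => mu _.
case: (agrees (proj23 K) mu) => /=; last by [].
by rewrite mulrA.
Qed.

Definition pi13 (a : X * Y * Z) : X * Z := (a.1.1, a.2).

Lemma R2 (rho : multation n X Z) : (forall xz, cnt h xz = val rho xz) ->
  (\sum_(K : mtriples n X Y Z | agrees (proj13 K) rho) (mcoef K)%:R * GK K =
   \sum_(ht : {ffun 'I_n -> X * Y * Z} | [forall k, pi13 (ht k) == h k]) GK (cntI ht))%R.
Proof.
move=> Hh; rewrite (sum_lifts_cnt pi13 h GK).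
have E : forall K : mtriples n X Y Z, forall b,
    proj13 K b = (\sum_(a | pi13 a == b) (K a : nat))%N.
  by move=> K b; rewrite /pi13 sum_fiber13.
apply: eq_big => K.
  by apply: eq_forallb => b; rewrite -E Hh.
move/forallP => HK; rewrite mulr_natl; congr (_ *+ _)%R.
have HK' : forall b, (\sum_(a | pi13 a == b) (K a : nat) = cnt h b)%N.
  by move=> b; rewrite -E Hh; apply/eqP; exact: HK.
rewrite (Ncnt_div HK') /mcoef; congr (_ %/ _)%N.
by apply: eq_bigr => b _; rewrite E HK'.
Qed.

Lemma R3 (ht : {ffun 'I_n -> X * Y * Z}) : is_maze Q -> is_maze P ->
  GK (cntI ht) = (GA eQ (fun k => ((ht k).1.1, (ht k).1.2)) *
                  GA eP (fun k => ((ht k).1.2, (ht k).2)))%R.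
Proof.
move=> mQ mP.
by rewrite /GK (Aq_ext n Q (proj12_cnt ht)) (Aq_ext n P (proj23_cnt ht)) !Aq_GA.
Qed.

Definition SF (F : {ffun 'I_n -> IQ}) (G : {ffun 'I_n -> IP}) : {ffun 'I_n -> X * Y * Z} :=
  [ffun k => ((eQ (F k)).1.1, (eQ (F k)).1.2, (eP (G k)).1.2)].
Definition surjF (T : finType) (F : {ffun 'I_n -> T}) := [forall i, exists k, F k == i].
Definition compFG (F : {ffun 'I_n -> IQ}) (G : {ffun 'I_n -> IP}) :=
  [forall k, (eQ (F k)).1.2 == (eP (G k)).1.1].
Definition endFG (F : {ffun 'I_n -> IQ}) (G : {ffun 'I_n -> IP}) :=
  [forall k, ((eQ (F k)).1.1, (eP (G k)).1.2) == h k].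
Definition wQ (F : {ffun 'I_n -> IQ}) := (\prod_k (eQ (F k)).2)%R.
Definition wP (G : {ffun 'I_n -> IP}) := (\prod_k (eP (G k)).2)%R.

Lemma CQP (F : {ffun 'I_n -> IQ}) (G : {ffun 'I_n -> IP}) (ht : {ffun 'I_n -> X * Y * Z}) :
  ([forall k, (eQ (F k)).1 == ((ht k).1.1, (ht k).1.2)] && [forall i, exists k, F k == i]) &&
  ([forall k, (eP (G k)).1 == ((ht k).1.2, (ht k).2)] && [forall i, exists k, G k == i]) =
  (ht == SF F G) && [&& surjF F, surjF G & compFG F G].
Proof.
apply/idP/idP.
  case/andP => /andP [/forallP H1 s1] /andP [/forallP H2 s2].
  apply/andP; split; last first.
    apply/and3P; split => //; apply/forallP => k.
    move: (H1 k) (H2 k); case: (ht k) => [[u v] w] /= /eqP -> /eqP -> //=.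
  apply/eqP/ffunP => k; rewrite ffunE.
  by move: (H1 k) (H2 k); case: (ht k) => [[u v] w] /= /eqP -> /eqP ->.
case/andP => /eqP -> /and3P [s1 s2 /forallP c].
rewrite /surjF in s1 s2; rewrite s1 s2 !andbT; apply/andP; split; apply/forallP => k; rewrite ffunE /=.
  by rewrite -surjective_pairing.
by rewrite (eqP (c k)) -surjective_pairing.
Qed.

Lemma R4 : is_maze Q -> is_maze P ->
  (\sum_(ht : {ffun 'I_n -> X * Y * Z} | [forall k, pi13 (ht k) == h k]) GK (cntI ht) =
   \sum_(F : {ffun 'I_n -> IQ}) \sum_(G : {ffun 'I_n -> IP})
     if [&& surjF F, surjF G, compFG F G & endFG F G] then wQ F * wP G else 0)%R.
Proof.
move=> mQ mP.
under eq_bigr => ht _ do rewrite R3 //.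
transitivity (\sum_(ht : {ffun 'I_n -> X * Y * Z} | [forall k, pi13 (ht k) == h k])
   \sum_(F : {ffun 'I_n -> IQ}) \sum_(G : {ffun 'I_n -> IP})
   if ([forall k, (eQ (F k)).1 == ((ht k).1.1, (ht k).1.2)] && [forall i, exists k, F k == i]) &&
      ([forall k, (eP (G k)).1 == ((ht k).1.2, (ht k).2)] && [forall i, exists k, G k == i])
   then wQ F * wP G else 0)%R.
  apply: eq_bigr => ht _; rewrite /GA big_distrl /= [LHS]big_mkcond /=.
  apply: eq_bigr => F _; case: ifP => CF; last by rewrite big1.
  rewrite big_distrr /= [LHS]big_mkcond /=; apply: eq_bigr => G _.
  by case: ifP.
rewrite exchange_big /=; apply: eq_bigr => F _.
rewrite exchange_big /=; apply: eq_bigr => G _.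
under eq_bigr => ht _ do rewrite CQP.
rewrite (eq_bigr (fun ht => if ht == SF F G then
    (if [&& surjF F, surjF G & compFG F G] then wQ F * wP G else 0) else 0))%R; last first.
  by move=> ht _; case: (ht == SF F G).
rewrite sum_if_eq.
have -> : [forall k, pi13 (SF F G k) == h k] = endFG F G.
  by apply: eq_forallb => k; rewrite ffunE.
by case: (endFG F G); case: (surjF F); case: (surjF G); case: (compFG F G).
Qed.

Lemma final_pt (H : {ffun 'I_n -> IQ * IP}) :
  (if lvalid (imH H) && liftH H then wH H else 0)%R =
  (if [&& surjF [ffun k => (H k).1], surjF [ffun k => (H k).2],
          compFG [ffun k => (H k).1] [ffun k => (H k).2] &
          endFG [ffun k => (H k).1] [ffun k => (H k).2]]
   then wQ [ffun k => (H k).1] * wP [ffun k => (H k).2] else 0)%R.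
Proof.
have inH : forall k, H k \in imH H by move=> k; rewrite inE; apply/existsP; exists k.
have E1 : [forall ij in imH H, (eQ ij.1).1.2 == (eP ij.2).1.1] =
          compFG [ffun k => (H k).1] [ffun k => (H k).2].
  apply/forallP/forallP => Hc k.
    by have := Hc (H k); rewrite inH /= !ffunE.
  apply/implyP; rewrite inE => /existsP [j /eqP <-].
  by have := Hc j; rewrite !ffunE.
have E2 : [forall i, exists j, (i, j) \in imH H] = surjF [ffun k => (H k).1].
  apply/forallP/forallP => Hs i.
    have/existsP [j] := Hs i; rewrite inE => /existsP [k /eqP Hk].
    by apply/existsP; exists k; rewrite ffunE Hk.
  have/existsP [k /eqP Hk] := Hs i; rewrite ffunE in Hk.
  apply/existsP; exists (H k).2; rewrite -Hk -surjective_pairing; exact: inH.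
have E3 : [forall j, exists i, (i, j) \in imH H] = surjF [ffun k => (H k).2].
  apply/forallP/forallP => Hs j.
    have/existsP [i] := Hs j; rewrite inE => /existsP [k /eqP Hk].
    by apply/existsP; exists k; rewrite ffunE Hk.
  have/existsP [k /eqP Hk] := Hs j; rewrite ffunE in Hk.
  apply/existsP; exists (H k).1; rewrite -Hk -surjective_pairing; exact: inH.
have E4 : liftH H = endFG [ffun k => (H k).1] [ffun k => (H k).2].
  by apply: eq_forallb => k; rewrite !ffunE.
have E5 : wH H = (wQ [ffun k => (H k).1] * wP [ffun k => (H k).2])%R.
  rewrite /wH /wQ /wP /phi /= big_split /= mulrC; congr (_ * _)%R;
    by apply: eq_bigr => k _; rewrite ffunE.
rewrite /lvalid E1 E2 E3 E4 E5.
by case: (surjF _); case: (surjF _); case: (compFG _ _); case: (endFG _ _).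
Qed.

End Comp.

Lemma pair_ffun (V : nmodType) (I J : finType) m
    (T : {ffun 'I_m -> I} -> {ffun 'I_m -> J} -> V) :
  (\sum_(F : {ffun 'I_m -> I}) \sum_(G : {ffun 'I_m -> J}) T F G =
   \sum_(H : {ffun 'I_m -> I * J}) T [ffun k => (H k).1] [ffun k => (H k).2])%R.
Proof.
rewrite pair_bigA /=.
rewrite (reindex (fun H : {ffun 'I_m -> I * J} =>
   ([ffun k => (H k).1], [ffun k => (H k).2]))) //=.
exists (fun p : {ffun 'I_m -> I} * {ffun 'I_m -> J} => [ffun k => (p.1 k, p.2 k)]).
  by move=> H _; apply/ffunP => k; rewrite !ffunE -surjective_pairing.
by move=> [F G] _; congr (_, _); apply/ffunP => k; rewrite !ffunE.
Qed.

Lemma An_comp_ok (R : comPzRingType) n (X Y Z : finType)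
    (Q : seq (passage R X Y)) (P : seq (passage R Y Z)) :
  is_maze Q -> is_maze P -> An_comp n Q P = mcomp (An n Q) (An n P).
Proof.
move=> mQ mP; apply/ffunP => rho.
have [h Hh] := exists_labeling (multation_sum rho).
rewrite (LHS_eq Q P Hh) R1 (R2 Q P Hh) (R4 h mQ mP) pair_ffun.
by apply: eq_bigr => H _; rewrite final_pt.
Qed.


Unset Implicit Arguments.

Theorem mainTheorem8 (R : comPzRingType) (n : nat) :
  (* A_n is well defined on multi-sets of passages *)
  (forall (X Y : finType) (P P' : seq (passage R X Y)),
      is_maze P -> perm_eq P P' -> An n P = An n P') /\
  (* A_n respects relation (I) *)
  (forall (X Y : finType) (P : seq (passage R X Y)) (x : X) (y : Y),
      is_maze (rcons P (x, y, 0%R)) -> An n (rcons P (x, y, 0%R)) = 0%R) /\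
  (* A_n respects relation (II) *)
  (forall (X Y : finType) (P : seq (passage R X Y)) (x : X) (y : Y) (a b : R),
      is_maze (rcons P (x, y, (a + b)%R)) ->
      An n (rcons P (x, y, (a + b)%R)) =
        (An n (rcons P (x, y, a)) + An n (rcons P (x, y, b))
         + An n (P ++ [:: (x, y, a); (x, y, b)]))%R) /\
  (* A_n preserves identities *)
  (forall X : finType, An n (lid R X) = mid R n X) /\
  (* A_n preserves composition: A_n(P o Q) = A_n(P) o A_n(Q) *)
  (forall (X Y Z : finType) (Q : seq (passage R X Y)) (P : seq (passage R Y Z)),
      is_maze Q -> is_maze P -> An_comp n Q P = mcomp (An n Q) (An n P)).
Proof.
split; [|split; [|split; [|split]]].
- by move=> X Y P P' _ pP; apply: An_perm.
- by move=> X Y P x y _; apply: An_zero.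
- by move=> X Y P x y a b _; apply: An_add.
- by move=> X; apply: An_id.
- by move=> X Y Z Q P mQ mP; apply: An_comp_ok.
Qed.
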